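(* Let $G$ be a group, $H$ an amenable normal subgroup of $G$, and $\rho\colon G\to G/H$ the natural homomorphism. Suppose $U_1,U_2\subseteq G$ are finite subsets such that for every pair of finite subsets $F_1,F_2\subseteq G$ we have $|F_1U_1\cup F_2U_2|\geq|F_1|+|F_2|$. Let $U_i'=\rho(U_i)$. Then for every pair of finite subsets $F_1',F_2'\subseteq G/H$ we have $|F_1'U_1'\cup F_2'U_2'|\geq|F_1'|+|F_2'|$.
   Context: $FU=\{fu: f\in F, u\in U\}$. *)

(* Defs.v *)
From mathcomp Require Import all_boot finmap.
Set Implicit Arguments. Unset Strict Implicit. Unset Printing Implicit Defensive.
Local Open Scope fset_scope.

Definition is_group (G : Type) (mul : G -> G -> G) (one : G) (inv : G -> G) : Prop :=
  [/\ associative mul, left_id one mul & left_inverse one inv mul].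

Definition is_hom (G Q : Type) (mulG : G -> G -> G) (mulQ : Q -> Q -> Q)
  (rho : G -> Q) : Prop := forall x y, rho (mulG x y) = mulQ (rho x) (rho y).

Definition setmul (G : choiceType) (mul : G -> G -> G) (F U : {fset G}) : {fset G} :=
  [fset mul f u | f in F, u in U].

(* Amenability of a (discrete) subgroup H, via the Følner condition:
   for every finite K ⊆ H and every ε = 1/n > 0 there is a nonempty finite
   F ⊆ H with |kF Δ F| < ε |F| for all k ∈ K. *)
Definition folner_amenable (G : choiceType) (mul : G -> G -> G) (H : G -> Prop) : Prop :=
  forall K : {fset G}, (forall k, k \in K -> H k) ->
  forall n : nat, 0 < n ->
  exists F : {fset G},
    [/\ F != fset0, (forall x, x \in F -> H x) &
        forall k, k \in K ->
          (#|` setmul mul [fset k] F `\` F| + #|` F `\` setmul mul [fset k] F|) * n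
            < #|` F|].

(* Main.v *)
Require Import Defs.
From mathcomp Require Import all_boot finmap zify.
Local Open Scope fset_scope.
Set Implicit Arguments.

Section GroupTh.
Variables (T : Type) (mul : T -> T -> T) (one : T) (inv : T -> T).
Hypothesis hg : is_group mul one inv.
Lemma gA : associative mul. Proof. by case: hg. Qed.
Lemma g1l : left_id one mul. Proof. by case: hg. Qed.
Lemma gVl x : mul (inv x) x = one. Proof. by case: hg => _ _ ->. Qed.
Lemma gKl x y : mul (inv x) (mul x y) = y. Proof. by rewrite gA gVl g1l. Qed.
Lemma gVr x : mul x (inv x) = one.
Proof.
rewrite -[LHS](gKl (inv x) (mul x (inv x))) (gA (inv x) x) (gVl x) g1l.
exact: gVl.
Qed.
Lemma g1r x : mul x one = x. Proof. by rewrite -(gVl x) gA gVr g1l. Qed.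
Lemma gKr x y : mul (mul y x) (inv x) = y. Proof. by rewrite -gA gVr g1r. Qed.
Lemma gcanl x : injective (mul x).
Proof. by move=> a b /(congr1 (mul (inv x))); rewrite !gKl. Qed.
Lemma gcanr x : injective (mul^~ x).
Proof. by move=> a b /(congr1 (mul^~ (inv x))) /=; rewrite !gKr. Qed.
Lemma ginvK x : inv (inv x) = x.
Proof. by apply: (@gcanl (inv x)); rewrite gVr gVl. Qed.
Lemma ginvM x y : inv (mul x y) = mul (inv y) (inv x).
Proof.
apply: (@gcanl (mul x y)); rewrite gVr -gA (gA y) gVr g1l gVr //.
Qed.
Lemma ginv_uniq a b : mul a b = one -> a = inv b.
Proof. by move=> h; rewrite -(gKr b a) h g1l. Qed.
Lemma gVKr x y : mul (mul y (inv x)) x = y. Proof. by rewrite -gA gVl g1r. Qed.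
Lemma gidem y : mul y y = y -> y = one.
Proof. by move=> h; apply: (@gcanl y); rewrite h g1r. Qed.
End GroupTh.

Lemma setmulP (T : choiceType) mul (A B : {fset T}) x :
  reflect (exists2 a, a \in A & exists2 b, b \in B & x = mul a b)
          (x \in setmul mul A B).
Proof. exact: imfset2P. Qed.

Lemma setmul_in (T : choiceType) mul (A B : {fset T}) a b :
  a \in A -> b \in B -> mul a b \in setmul mul A B.
Proof. by move=> aA bB; apply/setmulP; exists a => //; exists b. Qed.

Lemma card_img_le (T T' : choiceType) (f : T -> T') (B : {fset T}) :
  #|` f @` B| <= #|` B|.
Proof. exact: leq_imfset_card. Qed.

Lemma cardU_le (T : choiceType) (A B : {fset T}) : #|` A `|` B| <= #|` A| + #|` B|.
Proof. by rewrite -cardfsUI leq_addr. Qed.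

Lemma setmul_le (T : choiceType) mul (A B : {fset T}) :
  #|` setmul mul A B| <= #|` A| * #|` B|.
Proof.
elim/fset1U_rect: A => [|a A aA IH].
  have -> : setmul mul fset0 B = fset0.
    by apply/fsetP => x; rewrite inE; apply/setmulP => -[y]; rewrite inE.
  by rewrite cardfs0.
have sub : setmul mul (a |` A) B `<=` (mul a) @` B `|` setmul mul A B.
  apply/fsubsetP => x /setmulP [y /fset1UP [->|yA] [z zB ->]]; rewrite in_fsetU.
    by rewrite in_imfset.
  by rewrite setmul_in ?orbT.
rewrite (leq_trans (fsubset_leq_card sub)) // (leq_trans (cardU_le _ _)) //.
rewrite cardfsU1 aA /= mulSn leq_add // card_img_le //.
Qed.

Lemma folner_count (T : choiceType) mul (E K : {fset T}) (n : nat) :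
  (forall k, k \in K ->
     (#|` setmul mul [fset k] E `\` E| + #|` E `\` setmul mul [fset k] E|) * n
       < #|` E|) ->
  n * #|` E `|` setmul mul K E| <= n * #|` E| + #|` K| * #|` E|.
Proof.
elim/fset1U_rect: K => [|k K kK IH] hK.
  have -> : setmul mul fset0 E = fset0.
    by apply/fsetP => x; rewrite inE; apply/setmulP => -[y]; rewrite inE.
  by rewrite fsetU0 cardfs0 addn0.
have sub : E `|` setmul mul (k |` K) E `<=`
           (setmul mul [fset k] E `\` E) `|` (E `|` setmul mul K E).
  apply/fsubsetP => x; rewrite !in_fsetU => /orP [->|]; first by rewrite !orbT.
  move=> /setmulP [y /fset1UP [->|yK] [z zE ->]].
    case hz: (mul k z \in E); first by rewrite orbT.
    by rewrite in_fsetD hz /= setmul_in // inE.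
  by rewrite setmul_in ?orbT.
have IH' := IH (fun k' kK' => hK k' (fset1Ur _ kK')).
have hk := hK k (fset1U1 _ _).
have hk' : n * #|` setmul mul [fset k] E `\` E| <= #|` E|.
  by rewrite mulnC ltnW // (leq_ltn_trans _ hk) // leq_mul2r leq_addr orbT.
have c := leq_trans (fsubset_leq_card sub) (cardU_le _ _).
have c' : n * #|` E `|` setmul mul (k |` K) E| <=
          n * (#|` setmul mul [fset k] E `\` E| + #|` E `|` setmul mul K E|).
  by rewrite leq_mul2l c orbT.
rewrite (leq_trans c') // mulnDr cardfsU1 kK /= add1n mulSn addnCA.
exact: leq_add.
Qed.

Lemma setmul_lift_ge (G Q : choiceType) (mulG : G -> G -> G) (oneG : G) (invG : G -> G)
  (mulQ : Q -> Q -> Q) (oneQ : Q) (hG : is_group mulG oneG invG)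
  (hQ1 : left_id oneQ mulQ) (rho : G -> Q) (rho_hom : is_hom mulG mulQ rho)
  (lift : Q -> G) (hlift : forall q, rho (lift q) = q)
  (F : {fset G}) (hF : forall f, f \in F -> rho f = oneQ) (X : {fset Q}) :
  #|` F| * #|` X| <= #|` setmul mulG F (lift @` X)|.
Proof.
elim/fset1U_rect: X => [|q X qX IH]; first by rewrite cardfs0 muln0.
set A := (fun f => mulG f (lift q)) @` F.
have sub : A `|` setmul mulG F (lift @` X) `<=` setmul mulG F (lift @` (q |` X)).
  apply/fsubsetP => x; rewrite in_fsetU => /orP [/imfsetP [f fF ->]|
     /setmulP [f fF [l /imfsetP [q' q'X ->] ->]]].
    by apply: setmul_in => //; apply/imfsetP; exists q => //; rewrite fset1U1.
  by apply: setmul_in => //; apply/imfsetP; exists q' => //; rewrite fset1Ur.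
have dis : A `&` setmul mulG F (lift @` X) = fset0.
  apply/fsetP => x; rewrite in_fsetI in_fset0; apply/negP.
  move=> /andP [/imfsetP [f fF ->] /setmulP [f' f'F [l /imfsetP [q' q'X ->] e]]].
  have := congr1 rho e; rewrite !rho_hom !hlift hF // hF // !hQ1 => eq.
  by move: qX; rewrite eq /= q'X.
have cA : #|` A| = #|` F|.
  by rewrite card_in_imfset //= => x y _ _; apply: (gcanr hG).
apply: leq_trans (fsubset_leq_card sub).
have u : #|` A `|` setmul mulG F (lift @` X)| = (#|` A| + #|` setmul mulG F (lift @` X)|)%N.
  by rewrite -cardfsUI dis cardfs0 addn0.
rewrite u cA cardfsU1 qX /= add1n mulnS leq_add2l.
exact: IH.
Qed.

Unset Implicit Arguments.

Theorem lemma3p4 (G Q : choiceType)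
  (mulG : G -> G -> G) (oneG : G) (invG : G -> G)
  (mulQ : Q -> Q -> Q) (oneQ : Q) (invQ : Q -> Q)
  (hG : is_group mulG oneG invG) (hQ : is_group mulQ oneQ invQ)
  (H : G -> Prop) (rho : G -> Q)
  (rho_hom : is_hom mulG mulQ rho)
  (rho_surj : forall q : Q, exists g : G, rho g = q)
  (rho_ker : forall g : G, rho g = oneQ <-> H g)
  (H_amen : folner_amenable mulG H)
  (U1 U2 : {fset G})
  (hU : forall F1 F2 : {fset G},
      #|` F1| + #|` F2| <= #|` setmul mulG F1 U1 `|` setmul mulG F2 U2|) :
  forall F1' F2' : {fset Q},
    #|` F1'| + #|` F2'| <=
      #|` setmul mulQ F1' (rho @` U1) `|` setmul mulQ F2' (rho @` U2)|.
Proof.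
move=> F1' F2'.
have ex : forall q, exists g, rho g == q.
  by move=> q; case: (rho_surj q) => g <-; exists g.
pose lift q := xchoose (ex q).
have hlift : forall q, rho (lift q) = q by move=> q; apply/eqP; exact: (xchooseP (ex q)).
have rho1 : rho oneG = oneQ.
  by apply: (gidem hQ); rewrite -rho_hom (g1l hG).
have rhoV : forall g, rho (invG g) = invQ (rho g).
  by move=> g; apply: (ginv_uniq hQ); rewrite -rho_hom (gVl hG) rho1.
have inv1 : invQ oneQ = oneQ by rewrite -[RHS](gVl hQ oneQ) (g1r hQ).
pose S1 := lift @` F1'. pose S2 := lift @` F2'.
pose W := setmul mulQ F1' (rho @` U1) `|` setmul mulQ F2' (rho @` U2).
pose T := setmul mulG S1 U1 `|` setmul mulG S2 U2.
pose Z := (fun x => mulG x (invG (lift (rho x)))) @` T.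
pose K := invG @` Z.
have KH : forall k, k \in K -> H k.
  move=> k /imfsetP [z /imfsetP [x xT ->] ->]; apply/rho_ker.
  by rewrite rhoV rho_hom rhoV hlift (gVr hQ) inv1.
pose N := (#|` W| * #|` K| + 1)%N.
have N0 : 0 < N by rewrite /N addn1.
have [E [E0 EH Ef]] := H_amen K KH N N0.
pose F := invG @` E.
have Frho : forall f, f \in F -> rho f = oneQ.
  by move=> f /imfsetP [e eE ->]; rewrite rhoV (proj2 (rho_ker e)) ?inv1 //; apply: EH.
have cF : #|` F| = #|` E|.
  rewrite card_in_imfset //= => x y _ _ h.
  by rewrite -(ginvK hG x) h (ginvK hG).
have L1a := setmul_lift_ge hG (g1l hQ) rho_hom lift hlift F Frho F1'.
have L1b := setmul_lift_ge hG (g1l hQ) rho_hom lift hlift F Frho F2'.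
have hU' := hU (setmul mulG F S1) (setmul mulG F S2).
have TW : forall x, x \in T -> rho x \in W.
  move=> x; rewrite in_fsetU => /orP [] /setmulP [s /imfsetP [q qF ->] [u uU ->]];
    rewrite rho_hom hlift in_fsetU; apply/orP; [left|right];
    by apply: setmul_in => //; apply/imfsetP; exists u.
have key : forall f x, f \in F -> x \in T ->
    mulG f x \in setmul mulG (setmul mulG F Z) (lift @` W).
  move=> f x fF xT.
  rewrite -[x](gVKr hG (lift (rho x))) (gA hG).
  apply: setmul_in; first apply: setmul_in => //.
    by apply/imfsetP; exists x.
  by apply/imfsetP; exists (rho x) => //; apply: TW.
have sub1 : setmul mulG (setmul mulG F S1) U1 `|` setmul mulG (setmul mulG F S2) U2
    `<=` setmul mulG (setmul mulG F Z) (lift @` W).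
  apply/fsubsetP => y; rewrite in_fsetU => /orP [] /setmulP [fs /setmulP [f fF [s sS ->]] [u uU ->]];
    rewrite -(gA hG); apply: key => //; rewrite in_fsetU; apply/orP; [left|right];
    exact: setmul_in.
have sub2 : setmul mulG F Z `<=` invG @` (E `|` setmul mulG K E).
  apply/fsubsetP => y /setmulP [f /imfsetP [e eE ->] [z zZ ->]].
  apply/imfsetP; exists (mulG (invG z) e).
    by rewrite in_fsetU setmul_in ?orbT //; apply/imfsetP; exists z.
  by rewrite (ginvM hG) (ginvK hG).
have c1 := leq_trans hU' (fsubset_leq_card sub1).
have c2 := leq_trans c1 (setmul_le _ _ _).
have c3 : #|` setmul mulG F Z| * #|` lift @` W| <= #|` E `|` setmul mulG K E| * #|` W|.
  by apply: leq_mul; [apply: leq_trans (fsubset_leq_card sub2) _; apply: card_img_le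
                     | apply: card_img_le].
have c4 := @folner_count _ mulG E K N Ef.
have e0 : 0 < #|` E| by rewrite cardfs_gt0.
move: (leq_trans c2 c3) c4 L1a L1b e0; rewrite cF.
set e := #|` E|; set M := #|` E `|` setmul mulG K E|; set c := #|` W|.
rewrite /N; set k := #|` K|.
move: (#|` setmul mulG F S1|) (#|` setmul mulG F S2|) => x1 x2.
move=> h1 h2 h3 h4 h5; nia.
Qed.
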